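(* Let $\mathcal X$ be a GKM variety with a combinatorial moment graph as described in the context. Suppose that for each $T$-fixed point $v\in\mathcal X^T$ there exists at least one Knutson–Tao class $p^v\in H^*_T(\mathcal X)$. Then the classes $\{p^v: v\in\mathcal X^T\}$ form a basis of $H^*_T(\mathcal X)$ as a module over $\mathbb{C}[t_1,\ldots,t_n]$.
   Context: Let $T=(\mathbb{C}^* )^n$ and let $\mathcal X$ be a complex projective algebraic variety with an algebraic $T$-action having finitely many fixed points and finitely many one-dimensional orbits, and which is equivariantly formal (a GKM variety). The closure of each one-dimensional orbit $O$ contains exactly two fixed points $N_O,S_O$, and $T$ acts on the tangent line at $N_O$ by a weight $\alpha$ (a linear form in $t_1,\ldots,t_n$) and at $S_O$ by $-\alpha$. The moment graph has vertex set $\mathcal X^T$ and an edge between two fixed points for each one-dimensional orbit whose closure contains both. It is directed with no directed circuits, and each directed edge $v\to w$ is labeled $\alpha_{vw}$, the weight at $v$ of the corresponding orbit. Assume that for each $v$ the labels on the edges directed out of $v$ are pairwise linearly independent. By the GKM theorem, $H^*_T(\mathcal X)$ is the ring of tuples $(p_w)_{w\in\mathcal X^T}$, $p_w\in\mathbb{C}[t_1,\ldots,t_n]$, with $p_{N_O}-p_{S_O}\in\langle t_O\rangle$ for every one-dimensional orbit $O$ of weight $t_O$. Write $u\succeq_D u'$ if there is a directed path (possibly of length $0$) from $u$ to $u'$. A Knutson–Tao class for $v\in\mathcal X^T$ is a class $(p^v_w)_w\in H^*_T(\mathcal X)$ such that: (1) $p^v_v=\prod_{v\to w}\alpha_{vw}$,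 the product over all edges directed out of $v$; (2) each nonzero $p^v_w$ is homogeneous of degree $\deg p^v_v$; (3) $p^v_w=0$ whenever $w\not\succ_D v$, i.e. whenever $w\neq v$ and there is no directed path from $w$ to $v$. *)

(* Defs.v *)
From HB Require Import structures.
From mathcomp Require Import all_boot all_order all_algebra.
From mathcomp Require Import mpoly.
From mathcomp Require Import complex.
From mathcomp Require Import reals.
Set Implicit Arguments.
Unset Strict Implicit.
Unset Printing Implicit Defensive.
Import Order.TTheory GRing.Theory Num.Theory.
Local Open Scope ring_scope.

Section GKM.
Variables (R : realType) (n : nat).
Local Notation C := (Rcomplex R).
Local Notation P := {mpoly C[n]}.

(* A combinatorial moment graph: fixed points V (finite), one-dimensional
   orbits E (finite), each orbit e oriented as a directed edge src e -> tgt e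
   with label alpha e = the weight at src e. *)
Variables (V E : finType) (src tgt : E -> V) (alpha : E -> P).

Definition medge : rel V := fun v w => [exists e, (src e == v) && (tgt e == w)].

(* u >=_D u' : directed path (possibly of length 0) from u to u' *)
Definition dle (u u' : V) : bool := connect medge u u'.

Definition acyclic_mg : Prop := forall e : E, ~~ dle (tgt e) (src e).

Definition linear_form (a : P) : Prop := a != 0 /\ a \is 1.-homog for mdeg.

Definition lin_indep2 (a b : P) : Prop :=
  forall x y : C, x *: a + y *: b = 0 -> x = 0 /\ y = 0.

Definition out_indep : Prop :=
  forall e e' : E, e != e' -> src e = src e' -> lin_indep2 (alpha e) (alpha e').

Definition mdvd (a b : P) : Prop := exists c : P, b = c * a.

(* The GKM description of H_T^*(X): tuples (p_w)_w with
   alpha_O | p_{N_O} - p_{S_O} for each one-dimensional orbit O. *)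
Definition gkm_class (p : V -> P) : Prop :=
  forall e : E, mdvd (alpha e) (p (src e) - p (tgt e)).

Definition KT_class (v : V) (p : V -> P) : Prop :=
  [/\ gkm_class p,
      p v = \prod_(e | src e == v) alpha e,
      (exists d : nat, forall w, p w != 0 -> p w \is d.-homog for mdeg)
    & forall w, w != v -> ~~ dle w v -> p w = 0].

Definition is_basis (b : V -> V -> P) : Prop :=
  (forall v, gkm_class (b v)) /\
  (forall q, gkm_class q -> exists c : V -> P, forall w, q w = \sum_v c v * b v w) /\
  (forall c : V -> P, (forall w, \sum_v c v * b v w = 0) -> forall v, c v = 0).

End GKM.

(* Main.v *)
Require Import Defs.
From HB Require Import structures.
From mathcomp Require Import all_boot all_order all_algebra.
From mathcomp Require Import mpoly complex reals.
From mathcomp Require Import ring.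
Set Implicit Arguments.
Unset Strict Implicit.
Unset Printing Implicit Defensive.
Import GRing.Theory.
Local Open Scope ring_scope.

Section Alg.
Variables (R : realType) (n : nat).
Local Notation C := (Rcomplex R).
Local Notation P := {mpoly C[n]}.
Implicit Types (a b f g : P).

Lemma mdvd0 a : mdvd a 0. Proof. by exists 0; rewrite mul0r. Qed.
Lemma mdvdD a f g : mdvd a f -> mdvd a g -> mdvd a (f + g).
Proof. by move=> [c ->] [d ->]; exists (c + d); rewrite mulrDl. Qed.
Lemma mdvdN a f : mdvd a f -> mdvd a (- f).
Proof. by move=> [c ->]; exists (- c); rewrite mulNr. Qed.
Lemma mdvdB a f g : mdvd a f -> mdvd a g -> mdvd a (f - g).
Proof. by move=> ? ?; apply: mdvdD => //; apply: mdvdN. Qed.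
Lemma mdvdMl a f g : mdvd a f -> mdvd a (g * f).
Proof. by move=> [c ->]; exists (g * c); rewrite mulrA. Qed.
Lemma mdvdZ a f (c : C) : mdvd a f -> mdvd a (c *: f).
Proof. by move=> h; rewrite -mul_mpolyC; apply: mdvdMl. Qed.
Lemma mdvd_sum a (I : Type) (r : seq I) (Pr : pred I) (F : I -> P) :
  (forall i, Pr i -> mdvd a (F i)) -> mdvd a (\sum_(i <- r | Pr i) F i).
Proof.
move=> h; elim/big_ind: _ => //; [exact: mdvd0 | exact: mdvdD].
Qed.
Lemma mdvd_subM a x y x' y' : mdvd a (x - y) -> mdvd a (x' - y') ->
  mdvd a (x * x' - y * y').
Proof.
move=> h1 h2; have -> : x * x' - y * y' = x * (x' - y') + y' * (x - y).
  by ring.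
by apply: mdvdD; apply: mdvdMl.
Qed.
Lemma mdvd_subX a x y k : mdvd a (x - y) -> mdvd a (x ^+ k - y ^+ k).
Proof.
move=> h; elim: k => [|k ih]; first by rewrite !expr0 subrr; apply: mdvd0.
by rewrite !exprS; apply: mdvd_subM.
Qed.
Lemma mdvd_self a : mdvd a a. Proof. by exists 1; rewrite mul1r. Qed.


Lemma pivot a : linear_form a -> exists i : 'I_n, a@_U_(i) != 0.
Proof.
move=> [nz hom]; have hm := mlead_supp nz.
have /eqP hd := dhomog_mf hom hm.
have /mdeg1P [i /eqP hi] : mdeg (mlead a) == 1%N by rewrite hd.
by exists i; rewrite -hi -mcoeff_msupp.
Qed.

Lemma lin_expand b : b \is 1.-homog for mdeg ->
  b = \sum_(i < n) b@_U_(i) *: 'X_i.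
Proof.
move=> hom; apply/mpolyP => m; rewrite raddf_sum /=.
under eq_bigr do rewrite mcoeffZ mcoeffX.
have [/mdeg1P [j /eqP ->]|hm] := boolP (mdeg m == 1%N).
  rewrite (bigD1 j) //= eqxx mulr1 big1 ?addr0 // => i hij.
  case: eqP => [/mnmP /(_ j)|]; last by rewrite mulr0.
  by rewrite !mnm1E eqxx (negbTE hij).
rewrite (dhomog_nemf_coeff hom hm) big1 // => i _.
case: eqP => [him|]; last by rewrite mulr0.
by move: hm; rewrite -him mdeg1.
Qed.


Definition lq (a : P) (i : 'I_n) : n.-tuple P :=
  [tuple (if j == i then 'X_j - (a@_U_(i))^-1 *: a else 'X_j) | j < n].
Definition sig (a : P) (i : 'I_n) (f : P) : P := comp_mpoly (lq a i) f.

Lemma sigX a i j : sig a i 'X_j = if j == i then 'X_j - (a@_U_(i))^-1 *: a else 'X_j.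
Proof. by rewrite /sig comp_mpolyXU -tnth_nth tnth_mktuple. Qed.

Lemma sig_gen a i (co : 'I_n -> C) :
  sig a i (\sum_(j < n) co j *: 'X_j) =
  \sum_(j < n) co j *: 'X_j - (co i / a@_U_(i)) *: a.
Proof.
rewrite /sig raddf_sum /=.
under eq_bigr do rewrite comp_mpolyZ -/(sig a i _) sigX.
rewrite (bigD1 i) //= eqxx [in RHS](bigD1 i) //=.
rewrite (eq_bigr (fun j => co j *: 'X_j)); last first.
  by move=> j /negbTE ->.
rewrite scalerBr scalerA mulrC; ring.
Qed.

Lemma sig_lin a i b : b \is 1.-homog for mdeg ->
  sig a i b = b - (b@_U_(i) / a@_U_(i)) *: a.
Proof.
by move=> hom; have := sig_gen a i (fun j => b@_U_(j)); rewrite -lin_expand.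
Qed.

Lemma sig_self a i : linear_form a -> a@_U_(i) != 0 -> sig a i a = 0.
Proof.
by move=> [_ hom] nz; rewrite sig_lin // divff // scale1r subrr.
Qed.

Lemma sig_dvd a i f : mdvd a (f - sig a i f).
Proof.
have -> : f - sig a i f = f \mPo [tuple 'X_j | j < n] - sig a i f.
  by rewrite comp_mpoly_id.
rewrite /sig !comp_mpolyE -sumrB.
apply: mdvd_sum => m _; rewrite -scalerBr; apply: mdvdZ.
apply: (big_ind2 (fun x y => mdvd a (x - y))).
- by rewrite subrr; apply: mdvd0.
- by move=> x1 x2 y1 y2; apply: mdvd_subM.
move=> j _; apply: mdvd_subX.
rewrite tnth_map tnth_ord_tuple tnth_mktuple.
case: (j == i); last by rewrite subrr; apply: mdvd0.
by rewrite opprB addrC subrK; apply: mdvdZ; apply: mdvd_self.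
Qed.

Lemma dvd_sig0 a i f : linear_form a -> a@_U_(i) != 0 -> mdvd a f -> sig a i f = 0.
Proof.
move=> la nz [c ->]; rewrite /sig rmorphM /= -/(sig a i a) sig_self //.
by rewrite mulr0.
Qed.

Lemma sig0_dvd a i f : sig a i f = 0 -> mdvd a f.
Proof. by move=> h; have := sig_dvd a i f; rewrite h subr0. Qed.

End Alg.

Section Graph.
Variables (R : realType) (n : nat) (V E : finType) (src tgt : E -> V)
  (alpha : E -> {mpoly (Rcomplex R)[n]}).
Hypothesis Hne : forall e, src e != tgt e.
Hypothesis Hlin : forall e, linear_form (alpha e).
Hypothesis Hacyc : acyclic_mg src tgt.
Hypothesis Hind : out_indep src alpha.
Local Notation P := {mpoly (Rcomplex R)[n]}.

Lemma prod_dvd v (s : seq E) : forall f : P, uniq s -> all (fun e => src e == v) s ->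
  (forall e, e \in s -> mdvd (alpha e) f) -> mdvd (\prod_(e <- s) alpha e) f.
Proof.
elim: s => [|e s ih] f.
  by move=> _ _ _; exists f; rewrite big_nil mulr1.
rewrite cons_uniq /= => /andP [es us] /andP [/eqP se hs] hd.
have [g fg] := hd e (mem_head _ _).
have [d gd] : mdvd (\prod_(e0 <- s) alpha e0) g.
  apply: ih => // e' e's.
  have [i nzi] := pivot (Hlin e').
  apply: (sig0_dvd (i := i)).
  have := dvd_sig0 (Hlin e') nzi (hd e' (@mem_behead _ (e :: s) _ e's)).
  rewrite fg /sig rmorphM /= -!/(sig _ _ _).
  have [_ home] := Hlin e.
  rewrite (sig_lin _ _ home) => /eqP; rewrite mulf_eq0 => /orP [/eqP //|].
  rewrite subr_eq0 => /eqP h; exfalso.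
  have e'e : e' != e by apply: contraNneq es => <-.
  have sv : src e' = src e by rewrite se; move/allP: hs => /(_ e' e's) /eqP.
  have eq0 : (- ((alpha e)@_U_(i) / (alpha e')@_U_(i))) *: alpha e' + 1 *: alpha e = 0.
    by rewrite scale1r {2}h scaleNr addNr.
  have [_ ] := Hind e'e sv eq0.
  by move/eqP; rewrite oner_eq0.
by exists d; rewrite fg gd big_cons -mulrA [alpha e * _]mulrC.
Qed.

Lemma prod_dvd_out v (f : P) : (forall e, src e == v -> mdvd (alpha e) f) ->
  mdvd (\prod_(e | src e == v) alpha e) f.
Proof.
move=> h; rewrite -big_filter; apply: prod_dvd.
- by rewrite filter_uniq // index_enum_uniq.
- exact: filter_all.
by move=> e; rewrite mem_filter => /andP [/h].
Qed.


Local Notation dl := (dle src tgt).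
Definition hgt (w : V) : nat := #|[pred u | dl w u]|.

Lemma dle_edge e : dl (src e) (tgt e).
Proof. by apply: connect1; apply/existsP; exists e; rewrite !eqxx. Qed.

Lemma no_cycle x w : dl x w -> x != w -> ~~ dl w x.
Proof.
move=> /connectP [[|y p] pth lst] xw; first by move: xw; rewrite lst eqxx.
move: pth => /= /andP [/existsP [e /andP [/eqP se /eqP te]] pth].
apply/negP => wx.
have ye : dl y w by apply/connectP; exists p.
have := Hacyc e; rewrite se te.
by move/negP; apply; exact: (connect_trans ye wx).
Qed.

Lemma hgt_lt x w : dl x w -> x != w -> (hgt w < hgt x)%N.
Proof.
move=> xw nxw; apply: proper_card; apply/properP; split.
  by apply/subsetP => u; rewrite !inE => /(connect_trans xw).
exists x; rewrite !inE; [exact: connect0 | exact: (no_cycle xw nxw)].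
Qed.

Lemma hgt_edge e : (hgt (tgt e) < hgt (src e))%N.
Proof. by apply: hgt_lt; [apply: dle_edge | apply: Hne]. Qed.

Lemma hgt_le w : (hgt w <= #|V|)%N.
Proof. exact: max_card. Qed.


Variable p : V -> V -> P.
Hypothesis Hp : forall v, KT_class src tgt alpha v (p v).

Lemma p_diag v : p v v = \prod_(e | src e == v) alpha e.
Proof. by case: (Hp v). Qed.

Lemma p_off v w : w != v -> ~~ dl w v -> p v w = 0.
Proof. by case: (Hp v) => _ _ _; apply. Qed.

Lemma p_gkm v : gkm_class src tgt alpha (p v).
Proof. by case: (Hp v). Qed.

Lemma span_k d : forall k q, (#|V| < k + d)%N -> gkm_class src tgt alpha q ->
  (forall w, q w != 0 -> (k <= hgt w)%N) ->
  exists c : V -> P, forall w, q w = \sum_v c v * p v w.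
Proof.
elim: d => [|d ih] k q hk gq sq.
  exists (fun _ => 0) => w; rewrite big1 => [|v _]; last by rewrite mul0r.
  apply/eqP; apply: contraT => /sq; have := hgt_le w; rewrite addn0 in hk.
  by move=> h1 h2; have := leq_trans h2 h1; rewrite leqNgt hk.
have hdiv : forall w, exists c : P, hgt w = k -> q w = c * p w w.
  move=> w; case: (eqVneq (hgt w) k) => hw; last by exists 0 => h; rewrite h eqxx in hw.
  have [c hc] : mdvd (\prod_(e | src e == w) alpha e) (q w).
    apply: prod_dvd_out => e /eqP se.
    have := gq e; rewrite se.
    suff -> : q (tgt e) = 0 by rewrite subr0.
    apply/eqP; apply: contraT => /sq; have := hgt_edge e.
    by rewrite se hw => h1 h2; have := leq_trans h1 h2; rewrite ltnn.
  by exists c; rewrite p_diag.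
have [cf hcf] := fin_all_exists hdiv.
pose c0 v := if hgt v == k then cf v else 0.
pose q' w := q w - \sum_v c0 v * p v w.
have key : forall w, (hgt w <= k)%N -> \sum_v c0 v * p v w = q w.
  move=> w hw; rewrite (bigD1 w) //= big1 ?addr0; last first.
    move=> v vw; rewrite /c0; case: eqP => hv; last by rewrite mul0r.
    have [dwv|ndwv] := boolP (dl w v).
      have := hgt_lt dwv (negbT (introF eqP (fun e => (negP vw) (introT eqP (esym e))))).
      by rewrite hv ltnNge hw.
    by rewrite (p_off (negbT (introF eqP (fun e => (negP vw) (introT eqP (esym e))))) ndwv) mulr0.
  rewrite /c0; case: eqP => hwk; first by rewrite -hcf.
  rewrite mul0r; apply/esym/eqP; apply: contraT => /sq => hkw.
  by move: hwk; rewrite (eqP (_ : hgt w == k)) // eqn_leq hw hkw.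
have [c' hc'] : exists c : V -> P, forall w, q' w = \sum_v c v * p v w.
  apply: (ih k.+1); first by rewrite addSn -addnS.
    move=> e; rewrite /q'.
    have -> : q (src e) - \sum_v c0 v * p v (src e) - (q (tgt e) - \sum_v c0 v * p v (tgt e))
      = (q (src e) - q (tgt e)) - \sum_v c0 v * (p v (src e) - p v (tgt e)).
      rewrite [X in _ = _ - X](eq_bigr (fun v => c0 v * p v (src e) - c0 v * p v (tgt e))).
        by rewrite sumrB; ring.
      by move=> v _; rewrite mulrBr.
    apply: mdvdB; first exact: gq.
    apply: mdvd_sum => v _; apply: mdvdMl; exact: p_gkm.
  move=> w; rewrite /q'; apply: contraR; rewrite -leqNgt => hw.
  by rewrite key // subrr.
exists (fun v => c' v + c0 v) => w.
have -> : q w = q' w + \sum_v c0 v * p v w by rewrite /q' subrK.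
by rewrite hc' -big_split /=; apply: eq_bigr => v _; rewrite mulrDl.
Qed.

Lemma p_diag_neq0 v : p v v != 0.
Proof.
rewrite p_diag; apply/prodf_neq0 => e _; by case: (Hlin e).
Qed.

Lemma indep (c : V -> P) : (forall w, \sum_v c v * p v w = 0) -> forall v, c v = 0.
Proof.
move=> hc.
suff H : forall d v, (hgt v < d)%N -> c v = 0 by move=> v; apply: (H (hgt v).+1).
elim=> [//|d ih] v hv.
have := hc v; rewrite (bigD1 v) //= big1 ?addr0.
  by move/eqP; rewrite mulf_eq0 (negbTE (p_diag_neq0 v)) orbF => /eqP.
move=> u uv; have [dvu|ndvu] := boolP (dl v u).
  have vu : v != u by rewrite eq_sym.
  by rewrite ih ?mul0r // (leq_trans (hgt_lt dvu vu)).
by rewrite p_off ?mulr0 // eq_sym.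
Qed.

Lemma basis_main : is_basis src tgt alpha p.
Proof.
split; first exact: p_gkm.
split; last exact: indep.
move=> q gq; apply: (span_k (d := #|V|.+1) (k := 0)) => //; by rewrite add0n.
Qed.

End Graph.

Theorem mainTheorem2 (R : realType) (n : nat) (V E : finType)
    (src tgt : E -> V) (alpha : E -> {mpoly (Rcomplex R)[n]}) :
  (forall e, src e != tgt e) ->
  (forall e, linear_form (alpha e)) ->
  acyclic_mg src tgt ->
  out_indep src alpha ->
  forall p : V -> V -> {mpoly (Rcomplex R)[n]},
    (forall v, KT_class src tgt alpha v (p v)) ->
    is_basis src tgt alpha p.
Proof.
move=> Hne Hlin Hacyc Hind p Hp; exact: basis_main.
Qed.
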